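(* Let $G=\bigsqcup_{i=1}^t K_{n_i}$ be a disjoint union of complete graphs with $t\ge1$ and all $n_i\ge1$. Then \[ \mathcal{K}^{\mathsf{TS}}(G)=\{1\}\cup\{k\ge2:\ n_i\in\{1,k+1\}\text{ for every } i\}. \]
   Context: All graphs are finite, simple, undirected. A $k$-clique of a graph $H$ is a set of $k$ pairwise adjacent vertices. For a graph $H$ and integer $k\ge1$, the Token Sliding graph $\mathsf{TS}_k(H)$ has as vertices the $k$-cliques of $H$, and two $k$-cliques $A,B$ are adjacent iff $A\setminus B=\{u\}$, $B\setminus A=\{v\}$ for some vertices $u,v$ with $uv\in E(H)$. For a graph $G$, $\mathcal{K}^{\mathsf{TS}}(G)=\{k\ge1:\ \exists H,\ \mathsf{TS}_k(H)\cong G\}$. *)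

(* Defs.v *)
From mathcomp Require Import all_boot.
Set Implicit Arguments. Unset Strict Implicit. Unset Printing Implicit Defensive.

Definition simple_graph (T : finType) (e : rel T) : Prop :=
  symmetric e /\ irreflexive e.

Definition is_clique (T : finType) (e : rel T) (A : {set T}) : bool :=
  [forall x in A, forall y in A, (x != y) ==> e x y].

Definition TSV (T : finType) (e : rel T) (k : nat) : finType :=
  {A : {set T} | is_clique e A && (#|A| == k)}.

Definition TS_rel (T : finType) (e : rel T) (k : nat) : rel (TSV e k) :=
  fun A B => [exists u : T, exists v : T,
     [&& (val A :\: val B == [set u]), (val B :\: val A == [set v]) & e u v]].

Arguments TS_rel {T} e k _ _.

Definition graph_iso (V1 V2 : finType) (e1 : rel V1) (e2 : rel V2) : Prop :=
  exists f : V1 -> V2, bijective f /\ forall x y, e1 x y = e2 (f x) (f y).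

Definition KTS (V : finType) (g : rel V) (k : nat) : Prop :=
  1 <= k /\ exists (T : finType) (e : rel T),
    simple_graph e /\ graph_iso (TS_rel e k) g.

Arguments graph_iso {V1 V2} e1 e2.
Arguments KTS {V} g k.

(* Disjoint union of complete graphs K_{n 0}, ..., K_{n (t-1)}. *)
Definition cliques_vertex (t : nat) (n : 'I_t -> nat) : finType :=
  {i : 'I_t & 'I_(n i)}.

Definition cliques_rel (t : nat) (n : 'I_t -> nat) : rel (cliques_vertex n) :=
  fun x y => (tag x == tag y) && (x != y).

Arguments cliques_rel {t} n _ _.

(* Main.v *)
Require Import Defs.
From mathcomp Require Import all_boot.
Set Implicit Arguments. Unset Strict Implicit. Unset Printing Implicit Defensive.

Section Gen.
Variables (T : finType) (e : rel T).

Lemma cliqueP (S : {set T}) : is_clique e S ->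
  forall x y, x \in S -> y \in S -> x != y -> e x y.
Proof.
move=> /forallP HS x y xS yS xy.
by have := HS x; rewrite xS /= => /forallP/(_ y); rewrite yS xy.
Qed.

Lemma cliqueI (S : {set T}) :
  (forall x y, x \in S -> y \in S -> x != y -> e x y) -> is_clique e S.
Proof.
move=> H; apply/forallP=> x; apply/implyP=> xS; apply/forallP=> y.
by apply/implyP=> yS; apply/implyP; apply: H.
Qed.

Lemma clique_sub (A S : {set T}) : is_clique e S -> A \subset S -> is_clique e A.
Proof.
move=> /cliqueP HS sub; apply: cliqueI => x y xA yA; apply: HS;
  exact: (subsetP sub).
Qed.

Lemma sub_one (S A : {set T}) k : #|S| = k.+1 -> A \subset S -> #|A| = k ->
  exists2 a, a \in S & A = S :\ a.
Proof.
move=> cS sub cA.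
have : #|S :\: A| == 1 by rewrite cardsDS // cS cA subSnn.
case/cards1P=> a Ha.
have aS : a \in S by have := set11 a; rewrite -Ha inE => /andP[].
exists a => //; apply/setP=> z; rewrite !inE.
have : (z \in S :\: A) = (z \in [set a]) by rewrite Ha.
rewrite !inE /=.
case: (boolP (z \in A)) => zA /=.
  by rewrite (subsetP sub z zA) andbT => <-.
by move=> ->; case: (z == a).
Qed.

Lemma adj_in (S A B : {set T}) k : symmetric e -> is_clique e S ->
  #|S| = k.+1 -> A \subset S -> B \subset S -> #|A| = k -> #|B| = k -> A != B ->
  exists u v, [&& A :\: B == [set u], B :\: A == [set v] & e u v].
Proof.
move=> sym cl cS sA sB cA cB AB.
have [a aS Aa] := sub_one cS sA cA.
have [b bS Bb] := sub_one cS sB cB.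
have ab : a != b by apply: contraNneq AB => eab; rewrite Aa Bb eab.
exists b, a; apply/and3P; split.
- rewrite Aa Bb; apply/eqP/setP=> z; rewrite !inE.
  case: (eqVneq z b) => [->|zb] /=; first by rewrite eq_sym ab bS.
  by rewrite andbC; case: (z \in S); rewrite ?andbF.
- rewrite Aa Bb; apply/eqP/setP=> z; rewrite !inE.
  case: (eqVneq z a) => [->|za] /=; first by rewrite ab aS.
  by rewrite andbC; case: (z \in S); rewrite ?andbF.
- by rewrite sym; apply: (cliqueP cl) => //; rewrite eq_sym.
Qed.

End Gen.

Lemma iso_of (V W : finType) (rel1 : rel W) (e2 : rel V) (h : V -> W) :
  injective h -> (forall w, exists v, h v = w) ->
  (forall x y, e2 x y = rel1 (h x) (h y)) -> graph_iso rel1 e2.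
Proof.
move=> hi hs he.
have hb : bijective h.
  apply: inj_card_bij => //.
  have -> : #|W| = #|[set h x | x in [set: V]]|.
    rewrite -cardsT; congr (#|pred_of_set _|); apply/setP=> w; rewrite inE.
    by have [v <-] := hs w; rewrite imset_f ?inE.
  by rewrite (leq_trans (leq_imset_card _ _)) // cardsT.
case: hb => g hg gh; exists g; split; first by exists h.
by move=> x y; rewrite he !gh.
Qed.

Lemma card_comp t (n : 'I_t -> nat) i (P : pred nat) :
  #|[set z : cliques_vertex n | (tag z == i) && P (val (tagged z))]| =
  #|[set j : 'I_(n i) | P j]|.
Proof.
have inj : injective (fun j : 'I_(n i) => (Tagged (fun i => 'I_(n i)) j : cliques_vertex n)).
  by move=> a b H; exact: (eq_from_Tagged H).
rewrite -(card_imset _ inj); congr (#|pred_of_set _|); apply/setP=> z.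
rewrite inE; case: z => j c /=.
case: (eqVneq j i) => [eji|nji] /=.
  subst j; apply/idP/imsetP => [Pc|[d]]; first by exists c; rewrite ?inE.
  by rewrite inE => Pd H; rewrite (eq_from_Tagged H).
apply/esym/negbTE; apply/imsetP => -[d _ /(congr1 tag)] /= eji.
by rewrite eji eqxx in nji.
Qed.

Lemma card_ord_neq M r : #|[set j : 'I_M | val j != r]| = M - (r < M).
Proof.
case: (ltnP r M) => hr.
  rewrite (_ : [set j | _] = ~: [set Ordinal hr]) ?cardsC1 ?card_ord ?subn1 //.
  by apply/setP=> z; rewrite !inE -val_eqE.
rewrite subn0 (_ : [set j | _] = setT) ?cardsT ?card_ord //.
apply/setP=> z; rewrite !inE; apply/eqP=> zr.
by have := ltn_ord z; rewrite zr ltnNge hr.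
Qed.

Lemma simple_cliques t (n : 'I_t -> nat) : simple_graph (cliques_rel n).
Proof.
split; first by move=> x y; rewrite /cliques_rel eq_sym (eq_sym x).
by move=> x; rewrite /cliques_rel !eqxx.
Qed.

Lemma set1_TSV (T : finType) (e : rel T) (x : T) :
  is_clique e [set x] && (#|[set x]| == 1).
Proof.
rewrite cards1 eqxx andbT; apply: cliqueI => a b; rewrite !inE.
by move=> /eqP-> /eqP->; rewrite eqxx.
Qed.

Lemma set1D1 (T : finType) (x y : T) : x != y -> [set x] :\ y = [set x].
Proof.
move=> xy; apply/setP=> z; rewrite !inE.
by case: (eqVneq z x) => [->|_]; rewrite ?xy ?andbF.
Qed.

Lemma part1 t (n : 'I_t -> nat) : KTS (cliques_rel n) 1.
Proof.
split => //; exists (cliques_vertex n), (cliques_rel n); split; first exact: simple_cliques.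
pose h x : TSV (cliques_rel n) 1 := exist _ [set x] (set1_TSV (cliques_rel n) x).
apply: (@iso_of _ _ _ _ h).
- by move=> x y /(congr1 val) /= /set1_inj.
- case=> A HA; have /andP[_ /cards1P [x Ax]] := HA; exists x.
  by apply: val_inj; rewrite /= Ax.
- move=> x y; rewrite /TS_rel /=; apply/idP/existsP.
    move=> /[dup] Hxy /andP[_ xy]; exists x; apply/existsP; exists y.
    by apply/and3P; split => //; rewrite set1D1 // eq_sym.
  case=> u /existsP [v /and3P [h1 h2 he]].
  have : u \in [set u] := set11 u; rewrite -(eqP h1) !inE => /andP [_ /eqP ux].
  have : v \in [set v] := set11 v; rewrite -(eqP h2) !inE => /andP [_ /eqP vy].
  by rewrite -ux -vy.
Qed.

Lemma part3 t (n : 'I_t -> nat) k : KTS (cliques_rel n) k -> 2 <= k ->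
  forall i, n i != 1 -> 0 < n i -> n i = k.+1.
Proof.
move=> [_ [T [e [[sym _] [f [fb fe]]]]]] k2 i ni1 ni0.
have ni2 : 1 < n i by rewrite ltn_neqAle eq_sym ni1.
case: fb => finv fK finvK.
pose x0 : cliques_vertex n := Tagged (fun i => 'I_(n i)) (Ordinal ni0).
pose x1 : cliques_vertex n := Tagged (fun i => 'I_(n i)) (Ordinal ni2).
set A := finv x0; set B := finv x1.
have fA : f A = x0 by rewrite finvK.
have : TS_rel e k A B.
  by rewrite fe !finvK /cliques_rel eqxx /= eq_Tagged -val_eqE.
case/existsP=> u /existsP [v /and3P [h1 h2 euv]].
have vA : v \notin val A.
  by have : v \in [set v] := set11 v; rewrite -(eqP h2) inE => /andP[].
set S := v |: val A.
have AS : val A \subset S by apply: subsetU1.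
have cA : #|val A| = k by have /andP[_ /eqP] := valP A.
have cS : #|S| = k.+1 by rewrite cardsU1 vA cA.
have clS : is_clique e S.
  have clA : is_clique e (val A) by have /andP[] := valP A.
  have clB : is_clique e (val B) by have /andP[] := valP B.
  have vB : v \in val B.
    by have : v \in [set v] := set11 v; rewrite -(eqP h2) inE => /andP[].
  apply: cliqueI => a b; rewrite !inE => /orP[/eqP->|aA] /orP[/eqP->|bA].
  - by rewrite eqxx.
  - move=> vb; case: (boolP (b \in val B)) => bB.
      by apply: (cliqueP clB).
    have : b \in val A :\: val B by rewrite inE bB bA.
    by rewrite (eqP h1) inE => /eqP->; rewrite sym.
  - move=> av; case: (boolP (a \in val B)) => aB.
      by apply: (cliqueP clB).
    have : a \in val A :\: val B by rewrite inE aB aA.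
    by rewrite (eqP h1) inE => /eqP->.
  - by apply: (cliqueP clA).
have inS : forall D : TSV e k, val D \subset S -> tag (f D) = i.
  move=> D DS; case: (eqVneq D A) => [->|DA]; first by rewrite fA.
  have cD : #|val D| = k by have /andP[_ /eqP] := valP D.
  have : TS_rel e k D A.
    have DA' : val D != val A by rewrite val_eqE.
    have [p [q H]] := adj_in sym clS cS DS AS cD cA DA'.
    by apply/existsP; exists p; apply/existsP; exists q.
  by rewrite fe fA => /andP[/eqP].
have key : [set D : TSV e k | tag (f D) == i] = [set D : TSV e k | val D \subset S].
  apply/setP=> D; rewrite !inE; apply/idP/idP; last by move=> /inS ->.
  move=> /eqP tD; apply/subsetP=> w wD; case: (boolP (w \in S)) => // wS.
  exfalso.
  have wA : w \notin val A by apply: contra wS; apply: (subsetP AS).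
  have DA : D != A by apply: contraNneq wA => <-.
  have cD : #|val D| = k by have /andP[_ /eqP] := valP D.
  have : TS_rel e k D A.
    rewrite fe /cliques_rel tD fA eqxx /=.
    by apply: contra DA => /eqP /(f_equal finv); rewrite !fK => ->.
  case/existsP=> p /existsP [q /and3P [hp _ _]].
  have hw : val D :\: val A = [set w].
    have : w \in val D :\: val A by rewrite inE wA.
    by rewrite (eqP hp) inE => /eqP <-; apply/eqP.
  have : 0 < #|val D :&: val A|.
    have := cardsID (val A) (val D); rewrite hw cards1 cD.
    move=> H; have : 1 < #|val D :&: val A| + 1 by rewrite H.
    by rewrite addn1 ltnS.
  case/card_gt0P=> c; rewrite inE => /andP [cD' cA'].
  have cS' : c \in S by apply: (subsetP AS).
  have hE : is_clique e (S :\ c) && (#|S :\ c| == k).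
    apply/andP; split; first by apply: (clique_sub clS); apply: subD1set.
    by have := cardsD1 c S; rewrite cS' cS add1n => -[<-].
  pose E : TSV e k := exist _ (S :\ c) hE.
  have tE : tag (f E) = i by apply: inS; apply: subD1set.
  have DE : D != E.
    apply/eqP => DE; move: wD; rewrite DE /= inE => /andP[_ H].
    by rewrite H in wS.
  have : TS_rel e k D E.
    rewrite fe /cliques_rel tD tE eqxx /=.
    by apply: contra DE => /eqP /(f_equal finv); rewrite !fK => ->.
  case/existsP=> p' /existsP [q' /and3P [hp' _ _]].
  have : w \in val D :\: val E.
    rewrite /= !inE wD andbT -in_setU1; apply/negP => /andP[_ H].
    by rewrite H in wS.
  have : c \in val D :\: val E by rewrite /= !inE cD' eqxx.
  rewrite (eqP hp') !inE => /eqP <- /eqP wc.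
  by move: wS; rewrite wc cS'.
have : #|[set D : TSV e k | tag (f D) == i]| = n i.
  rewrite -(card_imset _ (bij_inj (Bijective fK finvK))).
  have cc := card_comp n i (fun _ => true).
  rewrite (_ : [set j : 'I_(n i) | true] = setT) ?cardsT ?card_ord in cc; last by apply/setP=> j; rewrite !inE.
  rewrite -cc.
  congr (#|pred_of_set _|); apply/setP=> z; rewrite !inE andbT.
  apply/imsetP/idP => [[D]|tz]; first by rewrite inE => + -> .
  by exists (finv z); rewrite ?inE finvK.
rewrite key -(card_imset _ val_inj) => <-.
rewrite -[k.+1]binSn -cS -cards_draws; congr (#|pred_of_set _|).
apply/setP=> X; rewrite !inE; apply/imsetP/idP => [[D]|/andP[XS /eqP cX]].
  by rewrite inE => DS ->; rewrite DS; have /andP[_ ->] := valP D.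
have hX : is_clique e X && (#|X| == k).
  by rewrite cX eqxx andbT; apply: (clique_sub clS).
by exists (exist _ X hX); rewrite ?inE.
Qed.

Section Part2.
Variables (t : nat) (n : 'I_t -> nat) (k : nat).
Hypothesis k2 : 2 <= k.
Hypothesis hn : forall i, n i = 1 \/ n i = k.+1.

Definition mm (i : 'I_t) := if n i == 1 then k else k.+1.
Definition TT := cliques_vertex mm.
Definition ee := cliques_rel mm.
Definition rr (x : cliques_vertex n) :=
  if n (tag x) == 1 then k else val (tagged x).
Definition hset (x : cliques_vertex n) : {set TT} :=
  [set z : TT | (tag z == tag x) && (val (tagged z) != rr x)].

Lemma mmE i : n i != 1 -> mm i = n i.
Proof.
rewrite /mm => ni1; rewrite (negbTE ni1).
by case: (hn i) ni1 => -> //; rewrite eqxx.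
Qed.

Lemma hset_ok x : is_clique ee (hset x) && (#|hset x| == k).
Proof.
apply/andP; split.
  apply: cliqueI => a b; rewrite !inE => /andP[/eqP ta _] /andP[/eqP tb _] ab.
  by rewrite /ee /cliques_rel ta tb eqxx.
rewrite /hset /TT (@card_comp _ mm (tag x) (fun j => j != rr x)) card_ord_neq /rr /mm.
case: ifP => ni1; first by rewrite ltnn subn0.
case: (hn (tag x)) => nk; first by rewrite nk eqxx in ni1.
by rewrite -[X in _ < X]nk ltn_ord subn1.
Qed.

Definition hk x : TSV ee k := exist _ (hset x) (hset_ok x).

Lemma hset_tag x z : z \in hset x -> tag z = tag x.
Proof. by rewrite inE => /andP[/eqP]. Qed.

Lemma hset_n0 x : exists z, z \in hset x.
Proof.
have /andP[_ /eqP c] := hset_ok x.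
have : 0 < #|hset x| by rewrite c; case: k k2.
by case/card_gt0P => z; exists z.
Qed.

Lemma hk_inj : injective hk.
Proof.
move=> x y /(congr1 val) /= hxy.
have [z zx] := hset_n0 x.
have txy : tag x = tag y.
  by rewrite -(hset_tag zx) (@hset_tag y z) // -hxy.
case: x y txy hxy {zx} => i a [j b] /= eij; subst j => hxy.
case: (eqVneq (n i) 1) => ni1.
  congr Tagged; apply: val_inj.
  have ha : val a < 1 by apply: (leq_trans (ltn_ord a)); rewrite ni1.
  have hb : val b < 1 by apply: (leq_trans (ltn_ord b)); rewrite ni1.
  by move: ha hb; rewrite !ltnS !leqn0 => /eqP-> /eqP->.
congr Tagged; apply: val_inj; apply/eqP/negPn/negP => ab.
have bm : val b < mm i by rewrite mmE // ltn_ord.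
pose w : TT := Tagged (fun i => 'I_(mm i)) (Ordinal bm).
have : w \in hset (Tagged (fun i => 'I_(n i)) a).
  by rewrite inE /= eqxx /rr /= ifN // eq_sym.
by rewrite hxy inE /= eqxx /rr /= ifN // eqxx.
Qed.


Lemma ord1_eq N (a b : 'I_N) : N = 1 -> a = b.
Proof.
move=> N1; apply: val_inj.
have ha : val a < 1 by apply: (leq_trans (ltn_ord a)); rewrite N1.
have hb : val b < 1 by apply: (leq_trans (ltn_ord b)); rewrite N1.
by move: ha hb; rewrite !ltnS !leqn0 => /eqP-> /eqP->.
Qed.

Definition comp i : {set TT} := [set z : TT | (tag z == i) && true].

Lemma card_compi i : #|comp i| = mm i.
Proof.
rewrite /comp /TT (@card_comp _ mm i (fun _ => true)).
by rewrite (_ : [set j : 'I_(mm i) | true] = setT) ?cardsT ?card_ord //;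
  apply/setP=> j; rewrite !inE.
Qed.

Lemma clique_comp i : is_clique ee (comp i).
Proof.
apply: cliqueI => a b; rewrite !inE !andbT => /eqP ta /eqP tb ab.
by rewrite /ee /cliques_rel ta tb eqxx.
Qed.

Lemma hset_comp x : hset x \subset comp (tag x).
Proof. by apply/subsetP=> z; rewrite !inE andbT => /andP[]. Qed.

Lemma hk_surj (w : TSV ee k) : exists x, hk x = w.
Proof.
case: w => D HD; have /andP[clD /eqP cD] := HD.
have : 0 < #|D| by rewrite cD (ltnW k2).
case/card_gt0P => z0 z0D.
move Ei : (tag z0) => i.
have DC : D \subset comp i.
  apply/subsetP=> z zD; rewrite inE andbT -Ei.
  case: (eqVneq z z0) => [->//|zz0].
  by have := cliqueP clD zD z0D zz0; rewrite /ee /cliques_rel => /andP[].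
case: (eqVneq (n i) 1) => ni1.
  have mi : mm i = k by rewrite /mm ni1 eqxx.
  have DeC : D = comp i.
    by apply/eqP; rewrite eqEcard DC card_compi cD mi leqnn.
  have n0 : 0 < n i by rewrite ni1.
  exists (Tagged (fun i => 'I_(n i)) (Ordinal n0)); apply: val_inj => /=.
  rewrite DeC; apply/setP => z; rewrite !inE /rr /= ni1 eqxx andbT.
  case: z => j c /=; case: (eqVneq j i) => //= ji.
  have lt : val c < k by apply: (leq_trans (ltn_ord c)); rewrite ji mi.
  by rewrite neq_ltn lt.
have mi : mm i = k.+1.
  by rewrite mmE //; case: (hn i) => // ni; rewrite ni eqxx in ni1.
have cC : #|comp i| = k.+1 by rewrite card_compi mi.
have [a aC Da] := sub_one cC DC cD.
move: aC Da; case: a => j c; rewrite inE /= andbT => /eqP ji Da.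
subst j.
have cn : val c < n i by apply: (leq_trans (ltn_ord c)); rewrite -mmE.
exists (Tagged (fun i => 'I_(n i)) (Ordinal cn)); apply: val_inj => /=.
rewrite Da; apply/setP => z; rewrite !inE /rr /= ifN // andbT.
case: z => j d /=; case: (eqVneq j i) => /= ji; last by rewrite andbF.
subst j; rewrite andbT eq_Tagged /= -val_eqE.
by [].
Qed.

Lemma hk_rel x y : cliques_rel n x y = TS_rel ee k (hk x) (hk y).
Proof.
apply/idP/idP.
  move=> /andP[/eqP txy xy].
  have hxy : hset x != hset y.
    apply: contra xy => /eqP H; apply/eqP; apply: hk_inj; exact: val_inj.
  have ni1 : n (tag x) != 1.
    apply: contra xy; move: txy; clear hxy; case: x => i a; case: y => j b /= eij.
    subst j => /eqP ni1; apply/eqP; congr Tagged; exact: ord1_eq.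
  have mi : mm (tag x) = k.+1.
    by rewrite mmE //; case: (hn (tag x)) => // ni; rewrite ni eqxx in ni1.
  have cC : #|comp (tag x)| = k.+1 by rewrite card_compi mi.
  have hyC : hset y \subset comp (tag x) by rewrite txy hset_comp.
  have /andP[_ /eqP cx] := hset_ok x.
  have /andP[_ /eqP cy] := hset_ok y.
  have [u [v H]] := adj_in (simple_cliques mm).1 (clique_comp (tag x)) cC
    (hset_comp x) hyC cx cy hxy.
  by apply/existsP; exists u; apply/existsP; exists v.
case/existsP => u /existsP [v /and3P [h1 h2 he]].
have uin : u \in hset x :\: hset y by rewrite (eqP h1) set11.
have vin : v \in hset y :\: hset x by rewrite (eqP h2) set11.
move: (uin) (vin); rewrite !in_setD => /andP[_ /hset_tag tu] /andP[_ /hset_tag tv].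
move: he; rewrite /ee /cliques_rel tu tv => /andP[-> _] /=.
by apply/eqP => exy; move: uin; rewrite exy setDv inE.
Qed.

End Part2.

Lemma part2 t (n : 'I_t -> nat) k : 2 <= k -> (forall i, n i = 1 \/ n i = k.+1) ->
  KTS (cliques_rel n) k.
Proof.
move=> k2 hn; split; first exact: ltnW.
exists (@TT t n k), (@ee t n k); split; first exact: simple_cliques.
apply: (iso_of (@hk_inj t n k k2 hn)); [exact: hk_surj | exact: hk_rel].
Qed.

Theorem proposition3p4 (t : nat) (n : 'I_t -> nat)
  (ht : 1 <= t) (hn : forall i, 1 <= n i) (k : nat) :
  KTS (cliques_rel n) k <->
  (k = 1 \/ (2 <= k /\ forall i, n i = 1 \/ n i = k.+1)).
Proof.
split.
  move=> H; have k1 := H.1.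
  case: (eqVneq k 1) => [->|k1']; first by left.
  have k2 : 2 <= k by rewrite ltn_neqAle eq_sym k1' k1.
  right; split => // i.
  case: (eqVneq (n i) 1) => ni1; first by left.
  by right; apply: (part3 H k2 ni1 (hn i)).
case=> [->|[k2 hk]]; first exact: part1.
exact: part2.
Qed.
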